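(* Let $H$ be a homogeneous relation on a finite set $V$. Define $s:\mathcal P(V)\to\mathbb R$ by $s(X)=|\mathcal S_X|$ for nonempty $X\subseteq V$ and $s(\emptyset)=-|V|$. Then $s$ is submodular: for all $X,Y\subseteq V$, $s(X)+s(Y)\ge s(X\cup Y)+s(X\cap Y)$.
   Context: $V$ is a finite set and $\mathcal P(V)$ its power set. A reflectless triple is a triple $(x,y,z)\in V^3$ with $x\neq y$ and $x\neq z$, written $(x|yz)$. A homogeneous relation $H$ on $V$ is a set of reflectless triples (we write $H(s|xy)$ when $(s|xy)\in H$) such that for every $s\in V$ the binary relation $H_s=\{(x,y): H(s|xy)\}$ is an equivalence relation on $V\setminus\{s\}$. For $X\subseteq V$ and $z\in V\setminus X$, $z$ distinguishes (splits) $X$ if there exist $x,y\in X$ with not $H(z|xy)$. $\mathcal S_X$ denotes the set of all elements of $V\setminus X$ distinguishing $X$. *)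

(* Defs.v *)
From mathcomp Require Import all_boot all_order all_algebra.
Set Implicit Arguments. Unset Strict Implicit. Unset Printing Implicit Defensive.
Import Order.TTheory GRing.Theory Num.Theory.

(* A ternary relation on V: [H s x y] means H(s|xy). *)
Definition trel (V : finType) := V -> V -> V -> bool.

Definition reflectless (V : finType) (H : trel V) : Prop :=
  forall s x y, H s x y -> x != s /\ y != s.

Definition homogeneous (V : finType) (H : trel V) : Prop :=
  reflectless H /\
  forall s : V,
    (forall x, x != s -> H s x x) /\
    (forall x y, H s x y -> H s y x) /\
    (forall x y z, H s x y -> H s y z -> H s x z).

Definition distinguishes (V : finType) (H : trel V) (z : V) (X : {set V}) : bool :=
  [exists x in X, exists y in X, ~~ H z x y].

Definition splitters (V : finType) (H : trel V) (X : {set V}) : {set V} :=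
  [set z in ~: X | distinguishes H z X].

Definition sfun (R : numDomainType) (V : finType) (H : trel V) (X : {set V}) : R :=
  if X == set0 then (- (#|V|%:R))%R else ((#|splitters H X|)%:R)%R.

(* Main.v *)
Require Import Defs.
From mathcomp Require Import all_boot all_order all_algebra.
Import Order.TTheory GRing.Theory Num.Theory.
Local Open Scope ring_scope.

Lemma dist_sub (V : finType) (H : trel V) z (A B : {set V}) :
  A \subset B -> distinguishes H z A -> distinguishes H z B.
Proof.
move=> sAB /existsP[x /andP[xA /existsP[y /andP[yA nH]]]].
apply/existsP; exists x; rewrite (subsetP sAB) //=.
by apply/existsP; exists y; rewrite (subsetP sAB).
Qed.

Lemma dist_union (V : finType) (H : trel V) z (X Y : {set V}) w :
  homogeneous H -> w \in X -> w \in Y ->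
  distinguishes H z (X :|: Y) -> distinguishes H z X || distinguishes H z Y.
Proof.
move=> [_ /(_ z) [_ [Hsym Htr]]] wX wY.
apply: contraLR; rewrite negb_or => /andP[nX nY].
apply/existsP => -[x /andP[xU /existsP[y /andP[yU nH]]]].
have allX : forall a b, a \in X -> b \in X -> H z a b.
  move=> a b aX bX; apply/negPn; apply: contra nX => nab.
  by apply/existsP; exists a; rewrite aX /=; apply/existsP; exists b; rewrite bX.
have allY : forall a b, a \in Y -> b \in Y -> H z a b.
  move=> a b aY bY; apply/negPn; apply: contra nY => nab.
  by apply/existsP; exists a; rewrite aY /=; apply/existsP; exists b; rewrite bY.
have toW : forall a, a \in X :|: Y -> H z a w.
  by move=> a /setUP[aX|aY]; [apply: allX|apply: allY].
by move/negP: nH; apply; apply: Htr (toW _ xU) (Hsym _ _ (toW _ yU)).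
Qed.

Lemma card_ineq (V : finType) (H : trel V) (X Y : {set V}) w :
  homogeneous H -> w \in X -> w \in Y ->
  (#|splitters H (X :|: Y)| + #|splitters H (X :&: Y)| <=
   #|splitters H X| + #|splitters H Y|)%N.
Proof.
move=> hH wX wY.
rewrite -!sum1_card !(big_mkcond (fun z => z \in _)) -!big_split /=.
apply: leq_sum => z _.
rewrite !inE.
have dI1 := @dist_sub V H z (X :&: Y) X (subsetIl X Y).
have dI2 := @dist_sub V H z (X :&: Y) Y (subsetIr X Y).
have dU := @dist_union V H z X Y w hH wX wY.
case zX: (z \in X); case zY: (z \in Y) => //=.
- by case: (distinguishes H z (X :&: Y)) dI2 => //= ->.
- by case: (distinguishes H z (X :&: Y)) dI1 => //= ->.
- case dXY: (distinguishes H z (X :|: Y)); case dI: (distinguishes H z (X :&: Y)) => //=.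
  + by rewrite dI1 // dI2.
  + by case/orP: (dU dXY) => ->; case: (distinguishes H z _).
  + by rewrite dI1.
Qed.

Theorem mainTheorem6 (R : realFieldType) (V : finType) (H : trel V) :
  homogeneous H ->
  forall X Y : {set V},
    sfun R H (X :|: Y) + sfun R H (X :&: Y) <= sfun R H X + sfun R H Y.
Proof.
move=> hH X Y.
have [->|X0] := eqVneq X set0.
  by rewrite set0U set0I addrC.
have [->|Y0] := eqVneq Y set0.
  by rewrite setU0 setI0.
have U0 : X :|: Y != set0.
  by case/set0Pn: X0 => x xX; apply/set0Pn; exists x; rewrite inE xX.
rewrite /sfun (negPf X0) (negPf Y0) (negPf U0).
case: (boolP (X :&: Y == set0)) => [I0|/set0Pn[w]].
  apply: (@le_trans _ _ 0).
    by rewrite subr_le0 ler_nat max_card.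
  by rewrite addr_ge0.
rewrite inE => /andP[wX wY].
by rewrite -!natrD ler_nat (@card_ineq V H X Y w hH wX wY).
Qed.
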